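(* Let $\mu>0$ and let $\{x^n\}$ be generated by GAITA (as in the context) from any $x^0\in\mathbf{R}^N$. For every $n\in\mathbf{N}$, with $i=(n\bmod N)+1$, either (a) $x_i^{n+1}=0$, or (b) $|x_i^{n+1}|\geq\eta_{\mu,q}$ and $$A_i^T(Ax^{n+1}-y)+\lambda q\, sgn(x_i^{n+1})|x_i^{n+1}|^{q-1}=\Big(\frac1\mu-A_i^TA_i\Big)(x_i^n-x_i^{n+1}).$$
   Context: Let $A\in\mathbf{R}^{m\times N}$ have columns $A_1,\dots,A_N$, $y\in\mathbf{R}^m$, $\lambda>0$, $q\in(0,1)$. For a step size $\mu>0$ set $\tau_{\mu,q}=\frac{2-q}{2-2q}(2\lambda\mu(1-q))^{\frac{1}{2-q}}$ and $\eta_{\mu,q}=(2\lambda\mu(1-q))^{\frac{1}{2-q}}$. For $z\in\mathbf{R}$ let $prox_{\mu,\lambda|\cdot|^q}(z)=\arg\min_{v\in\mathbf{R}}\{\frac{(z-v)^2}{2\mu}+\lambda|v|^q\}$ (a single point when $|z|\neq\tau_{\mu,q}$). Define $\mathcal{T}(z,w)$ as the unique element of $prox_{\mu,\lambda|\cdot|^q}(z)$ if $|z|\neq\tau_{\mu,q}$, and, if $|z|=\tau_{\mu,q}$, as $sgn(z)\eta_{\mu,q}$ when $w\neq0$ and $0$ when $w=0$ ($sgn(0)=0$). GAITA: given $x^0\in\mathbf{R}^N$, for $n=0,1,2,\dots$ let $i=(n\bmod N)+1$, $z_i^n=x_i^n-\mu A_i^T(Ax^n-y)$, $x_i^{n+1}=\mathcal{T}(z_i^n,x_i^n)$,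 $x_j^{n+1}=x_j^n$ for $j\neq i$. *)

(* Defs.v *)
From HB Require Import structures.
From mathcomp Require Import all_boot all_order all_algebra.
From mathcomp Require Import all_classical all_reals all_analysis.
Set Implicit Arguments. Unset Strict Implicit. Unset Printing Implicit Defensive.
Import Order.TTheory GRing.Theory Num.Theory.
Local Open Scope classical_set_scope.
Local Open Scope ring_scope.

Section GAITA.
Variables (R : realType) (m N : nat) (A : 'M[R]_(m, N)) (y : 'cV[R]_m)
          (lambda q mu : R).

Definition tau_mq : R :=
  (2 - q) / (2 - 2 * q) * (2 * lambda * mu * (1 - q)) `^ (1 / (2 - q)).
Definition eta_mq : R := (2 * lambda * mu * (1 - q)) `^ (1 / (2 - q)).

(* objective of the scalar prox problem; |v|^q via powR (0 `^ q = 0 for q <> 0) *)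
Definition prox_obj (z v : R) : R := (z - v) ^+ 2 / (2 * mu) + lambda * (`|v| `^ q).

Definition prox (z : R) : set R := [set v | forall w, prox_obj z v <= prox_obj z w].

Definition Top (z w : R) : R :=
  if `|z| != tau_mq then xget 0 (prox z)
  else if w != 0 then Num.sg z * eta_mq else 0.

Definition colT_mul (i : 'I_N) (v : 'cV[R]_m) : R := ((col i A)^T *m v) 0 0.

(* one GAITA step at iteration n, index i = n mod N (0-based) *)
Definition gaita_step (i : 'I_N) (x : 'cV[R]_N) : 'cV[R]_N :=
  let z := x i 0 - mu * colT_mul i (A *m x - y) in
  \col_j (if j == i then Top z (x i 0) else x j 0).

Variable HN : (0 < N)%N.

Definition gaita_idx (n : nat) : 'I_N := Ordinal (ltn_pmod n HN).

Fixpoint gaita (x0 : 'cV[R]_N) (n : nat) : 'cV[R]_N :=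
  match n with
  | 0 => x0
  | n'.+1 => gaita_step (gaita_idx n') (gaita x0 n')
  end.

End GAITA.

(* Main.v *)
Require Import Defs.
From HB Require Import structures.
From mathcomp Require Import all_boot all_order all_algebra.
From mathcomp Require Import all_classical all_reals all_analysis.
From mathcomp Require Import ring lra.
Import Order.TTheory GRing.Theory Num.Theory.
Local Open Scope ring_scope.

Lemma stat_pos (R : realType) (lambda q mu z v : R) :
  0 < mu -> 0 < v ->
  prox lambda q mu z v ->
  v - z + mu * (lambda * q * v `^ (q - 1)) = 0.
Proof.
move=> hmu hv hp.
have hm : mu != 0 by rewrite gt_eqF.
pose g : R -> R := (2 * mu)^-1 \*: ((cst z - id) ^+ 2) + lambda \*: (@powR R ^~ q).
have gE : forall t, g t = (z - t) ^+ 2 / (2 * mu) + lambda * t `^ q.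
  move=> t; transitivity ((2 * mu)^-1 * (z - t)^+2 + lambda * t `^ q); first by []. by rewrite mulrC.
have D1 : forall t : R, 0 < t -> is_derive t (1:R) g ((t - z) / mu + lambda * (q * t `^ (q - 1))).
  move=> t ht.
  have H := is_deriveD (is_deriveZ (2 * mu)^-1 (is_deriveX 2 (is_deriveB (is_derive_cst z t 1) (is_derive_id t 1))))
           (is_deriveZ lambda (is_derive1_powR q ht)).
  apply: (is_derive_eq H).
  rewrite expr1 /GRing.scale /=.
  have -> : (cst z - id) t = z - t by [].
  field.
  exact: hm.
have D0 : is_derive v (1:R) g 0.
  apply: (@derive1_at_min _ g 0 (2 * v) v).
  - by rewrite mulr_ge0 // ltW.
  - move=> t; rewrite in_itv /= => /andP [t0 _].
    by case: (D1 t t0).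
  - rewrite in_itv /= hv /=; lra.
  - move=> t; rewrite in_itv /= => /andP [t0 _].
    have := hp t; rewrite /prox_obj !gtr0_norm // !gE.
    by [].
case: (D1 v hv) => _ E1; case: D0 => _ E; rewrite E1 in E.
transitivity (mu * ((v - z)/mu + lambda*(q*v `^ (q - 1)))); first by field.
by rewrite E mulr0.
Qed.

Lemma eta_pos (R : realType) (lambda q mu z v : R) :
  0 < lambda -> 0 < q -> q < 1 -> 0 < mu -> 0 < v ->
  v - z + mu * (lambda * q * v `^ (q - 1)) = 0 ->
  prox lambda q mu z v -> eta_mq lambda q mu <= v.
Proof.
move=> hl hq0 hq1 hmu hv S hp.
have := hp 0; rewrite /prox_obj normr0 powR0 ?gt_eqF // mulr0 addr0.
rewrite gtr0_norm // -(mulr_powRB1 (ltW hv) hq0).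
set P := v `^ (q - 1) in S *.
have hP : 0 < P by rewrite powR_gt0.
have -> : z = v + mu * (lambda * q * P) by lra.
move=> H.
have H2 : (2 * lambda * mu * (1 - q)) * P <= v.
  have hm2 : 0 < 2 * mu by lra.
  move: H; rewrite -subr_ge0 => H.
  have := mulr_ge0 (ltW hm2) H.
  set LHS := (_ * _).
  have -> : LHS = v * (v - (2 * lambda * mu * (1 - q)) * P) by rewrite /LHS; field; rewrite gt_eqF.
  rewrite pmulr_rge0 //; lra.
have hv2 : v `^ (2 - q) * P = v.
  rewrite /P -powRD; last by rewrite (gt_eqF hv) implybT.
  have -> : 2 - q + (q - 1) = 1 by ring.
  by rewrite powRr1 // ltW.
have H3 : 2 * lambda * mu * (1 - q) <= v `^ (2 - q).
  by rewrite -(ler_pM2r hP) hv2.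
rewrite /eta_mq.
have hq2 : 0 < 2 - q by lra.
apply: (@le_trans _ _ ((v `^ (2 - q)) `^ (1 / (2 - q)))).
  apply: ge0_ler_powR => //.
  - by rewrite divr_ge0 // ltW.
  - rewrite nnegrE; apply: mulr_ge0; [|lra]. apply: mulr_ge0; [|lra]. lra.
  - by rewrite nnegrE powR_ge0.
rewrite -powRrM.
have -> : (2 - q) * (1 / (2 - q)) = 1 by field; rewrite gt_eqF.
by rewrite powRr1 // ltW.
Qed.

Lemma prox_nz (R : realType) (lambda q mu z v : R) :
  0 < lambda -> 0 < q -> q < 1 -> 0 < mu -> v != 0 ->
  prox lambda q mu z v ->
  eta_mq lambda q mu <= `|v| /\
  v - z + mu * (lambda * q * Num.sg v * `|v| `^ (q - 1)) = 0.
Proof.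
move=> hl hq0 hq1 hmu hv0 hp.
have [hv|hv|hv] := ltgtP v 0; last by rewrite hv eqxx in hv0.
- have hp' : prox lambda q mu (- z) (- v).
    move=> w; have := hp (- w); rewrite /prox_obj !normrN.
    by rewrite -opprD sqrrN opprK -opprD sqrrN.
  have hv' : 0 < - v by rewrite oppr_gt0.
  have S := @stat_pos R lambda q mu (- z) (- v) hmu hv' hp'.
  have := @eta_pos R lambda q mu (- z) (- v) hl hq0 hq1 hmu hv' S hp'.
  rewrite ltr0_norm // ltr0_sg // => ->; split => //.
  lra.
- have S := @stat_pos R lambda q mu z v hmu hv hp.
  rewrite gtr0_norm // gtr0_sg // mulr1; split => //.
  exact: (@eta_pos R lambda q mu z v) hl hq0 hq1 hmu hv S hp.
Qed.

Lemma tau_case (R : realType) (lambda q mu z : R) :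
  0 < lambda -> 0 < q -> q < 1 -> 0 < mu -> `|z| = tau_mq lambda q mu ->
  let T := Num.sg z * eta_mq lambda q mu in
  eta_mq lambda q mu <= `|T| /\
  T - z + mu * (lambda * q * Num.sg T * `|T| `^ (q - 1)) = 0.
Proof.
move=> hl hq0 hq1 hmu hz T.
set K := 2 * lambda * mu * (1 - q).
have hK : 0 < K by rewrite /K; apply: mulr_gt0; [apply: mulr_gt0; [apply: mulr_gt0|]|]; lra.
have hq2 : 0 < 2 - q by lra.
set e := eta_mq lambda q mu.
have he : 0 < e by rewrite /e /eta_mq powR_gt0.
have hz0 : z != 0.
  apply/negP => /eqP z0; move: hz; rewrite z0 normr0 /tau_mq -/K => /esym/eqP.
  rewrite mulf_eq0 powR_eq0 (gt_eqF hK) /= orbF mulf_eq0 invr_eq0; lra.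
have hsg : `|Num.sg z| = 1 by rewrite normr_sg hz0.
have hT : `|T| = e by rewrite /T normrM hsg mul1r gtr0_norm.
have hsT : Num.sg T = Num.sg z by rewrite /T sgrM (gtr0_sg he) mulr1 sgr_id.
rewrite hT hsT; split => //.
have e2 : e `^ (2 - q) = K.
  rewrite /e /eta_mq -/K -powRrM.
  have -> : 1 / (2 - q) * (2 - q) = 1 by field; rewrite gt_eqF.
  by rewrite powRr1 // ltW.
have e3 : K * e `^ (q - 1) = e.
  rewrite -e2 -powRD; last by rewrite (gt_eqF he) implybT.
  have -> : 2 - q + (q - 1) = 1 by ring.
  by rewrite powRr1 // ltW.
have ztau : z = Num.sg z * (((2 - q) / (2 - 2 * q)) * e).
  by rewrite {1}[z]numEsg hz /tau_mq /e /eta_mq.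
have hP : e `^ (q - 1) = e / K.
  have hK0 : K != 0 by rewrite gt_eqF.
  by apply: (mulfI hK0); rewrite e3; field.
rewrite hP /T -/e.
set s := Num.sg z in ztau *.
rewrite [X in _ - X + _]ztau /K.
have h1 : 1 - q != 0 by rewrite gt_eqF //; lra.
have h2 : 2 - 2 * q != 0 by rewrite gt_eqF //; lra.
have h3 : lambda != 0 by rewrite gt_eqF.
have h4 : mu != 0 by rewrite gt_eqF.
field. by rewrite h1 h2 h3 h4.

Qed.

Lemma Top_prop (R : realType) (lambda q mu z w : R) :
  0 < lambda -> 0 < q -> q < 1 -> 0 < mu ->
  let T := Top lambda q mu z w in
  T = 0 \/ (eta_mq lambda q mu <= `|T| /\
  T - z + mu * (lambda * q * Num.sg T * `|T| `^ (q - 1)) = 0).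
Proof.
move=> hl hq0 hq1 hmu T; rewrite /T /Top.
case: ifPn => [_|/negPn/eqP hz].
  case: xgetP => [v _ hp|_]; last by left.
  have [->|v0] := eqVneq v 0; first by left.
  by right; exact: prox_nz.
case: ifPn => _; last by left.
by right; exact: tau_case.
Qed.

Lemma colT_sum (R : realType) m N (A : 'M[R]_(m, N)) i (v : 'cV[R]_m) :
  colT_mul A i v = \sum_k A k i * v k 0.
Proof. by rewrite /colT_mul !mxE; apply: eq_bigr => k _; rewrite !mxE. Qed.

Lemma step_lin (R : realType) m N (A : 'M[R]_(m, N)) y i (x : 'cV[R]_N) T :
  let x' := \col_j (if j == i then T else x j 0) in
  colT_mul A i (A *m x' - y) = colT_mul A i (A *m x - y) + colT_mul A i (col i A) * (T - x i 0).
Proof.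
move=> x'; rewrite !colT_sum mulr_suml -big_split /=; apply: eq_bigr => k _.
rewrite !mxE -mulrA -mulrDr; congr (_ * _).
rewrite (bigD1 i) //= (bigD1 i (P := xpredT)) //= !mxE eqxx.
have -> : \sum_(j < N | j != i) A k j * x' j 0 = \sum_(j < N | j != i) A k j * x j 0.
  by apply: eq_bigr => j /negPf hj; rewrite mxE hj.
ring.
Qed.

Theorem mainTheorem7 (R : realType) (m N : nat) (HN : (0 < N)%N)
  (A : 'M[R]_(m, N)) (y : 'cV[R]_m) (lambda q mu : R)
  (Hlam : 0 < lambda) (Hq0 : 0 < q) (Hq1 : q < 1) (Hmu : 0 < mu)
  (x0 : 'cV[R]_N) (n : nat) :
  let x := gaita A y lambda q mu HN x0 in
  let i := gaita_idx HN n in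
  x n.+1 i 0 = 0 \/
  (eta_mq lambda q mu <= `|x n.+1 i 0| /\
   colT_mul A i (A *m x n.+1 - y)
     + lambda * q * Num.sg (x n.+1 i 0) * `|x n.+1 i 0| `^ (q - 1)
   = (mu^-1 - colT_mul A i (col i A)) * (x n i 0 - x n.+1 i 0)).
Proof.
move=> x i.
set z := x n i 0 - mu * colT_mul A i (A *m x n - y).
set T := Top lambda q mu z (x n i 0).
have Ex : x n.+1 = \col_j (if j == i then T else x n j 0) by [].
have ET : x n.+1 i 0 = T by rewrite Ex mxE eqxx.
have L := @step_lin R m N A y i (x n) T; rewrite /= -Ex in L.
rewrite L ET.
have hm : mu != 0 by rewrite gt_eqF.
case: (@Top_prop R lambda q mu z (x n i 0) Hlam Hq0 Hq1 Hmu) => [h|[h1 h2]]; [by left | right; split => //].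
set S := lambda * q * Num.sg T * `|T| `^ (q - 1) in h2 *.
apply/eqP; rewrite -subr_eq0; apply/eqP.
transitivity (mu^-1 * (T - z + mu * S)); last by rewrite h2 mulr0.
rewrite /z; field; exact: hm.
Qed.
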